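(* Let $p\geq 1$ be an integer and define $\mathcal{G}_p:[-1,1]\times[-1,1]\to\mathbb{R}$ by $$\mathcal{G}_p(x,y)=\int_{-1}^1 \mathrm{ReLU}^p(z-x)\,\mathrm{ReLU}^p(z-y)\,dz .$$ Then, in the sense of distributions in $x$ (for fixed $y$), $$\frac{\partial^{2p+2}}{\partial x^{2p+2}}\mathcal{G}_p(x,y)=(-1)^{p-1}(p!)^2\,\delta(x-y),$$ where $\delta$ is the Dirac distribution.
   Context: $\mathrm{ReLU}^p(z)=(\max\{0,z\})^p$ for $z\in\mathbb{R}$. *)

(* Defs.v *)
From Stdlib Require Import Reals Factorial.
From Coquelicot Require Import Coquelicot.
Open Scope R_scope.

Definition relu_pow (p : nat) (z : R) : R := (Rmax 0 z) ^ p.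

Definition G (p : nat) (x y : R) : R :=
  RInt (fun z => relu_pow p (z - x) * relu_pow p (z - y)) (-1) 1.

Definition test_function (phi : R -> R) : Prop :=
  (forall (n : nat) (x : R), ex_derive_n phi n x) /\
  (exists a b : R, -1 < a /\ b < 1 /\ forall x, x < a \/ b < x -> phi x = 0).

(* The n-th distributional derivative (on (-1,1)) of the locally integrable
   function f equals the distribution T:
   for every test function phi, <f^{(n)}, phi> = (-1)^n \int f phi^{(n)} = T phi. *)
Definition distr_deriv_n_eq (f : R -> R) (n : nat) (T : (R -> R) -> R) : Prop :=
  forall phi, test_function phi ->
    (-1) ^ n * RInt (fun x => f x * Derive_n phi n x) (-1) 1 = T phi.

Definition dirac (y : R) : (R -> R) -> R := fun phi => phi y.

(* Main.v *)
Require Import Defs.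
From Stdlib Require Import Reals Factorial Lra Lia.
From Coquelicot Require Import Coquelicot.
Open Scope R_scope.

Ltac req := match goal with |- @eq _ ?a ?b => change (@eq R a b) end.


Lemma c2d_swap F x z : continuity_2d_pt F x z -> continuity_2d_pt (fun a b => F b a) z x.
Proof. intros H eps; destruct (H eps) as [d Hd]; exists d; intros u v Hu Hv; apply Hd; auto. Qed.

Lemma c2d_2 F x z : continuity_2d_pt F x z -> continuity_pt (fun t => F x t) z.
Proof.
  intros H eps Heps; destruct (H (mkposreal eps Heps)) as [d Hd].
  exists d; split; [apply cond_pos|]. intros t [_ Ht]; simpl in *; unfold R_dist in *.
  apply Hd; auto. rewrite Rminus_eq_0, Rabs_R0; apply cond_pos.
Qed.

Lemma c2d_1 F x z : continuity_2d_pt F x z -> continuity_pt (fun t => F t z) x.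
Proof. intros H; apply (c2d_2 (fun a b => F b a)); now apply c2d_swap. Qed.

Lemma param_cont0 F c d x0 : c <= d -> (forall x z, continuity_2d_pt F x z) ->
  continuity_pt (fun x => RInt (fun z => F x z) c d) x0.
Proof.
  intros hcd HF eps Heps.
  assert (He : 0 < eps / (d - c + 1)) by (apply Rdiv_lt_0_compat; lra).
  destruct (uniform_continuity_2d_1d' F c d x0 (fun z _ => HF x0 z) (mkposreal _ He)) as [dl Hdl].
  exists dl; split; [apply cond_pos|]. intros x [_ Hx]; simpl in *; unfold R_dist in *.
  assert (Hex : forall w, ex_RInt (fun z => F w z) c d).
  { intros w; apply (ex_RInt_continuous (V:=R_CompleteNormedModule)); intros z _.
    apply continuity_pt_filterlim; apply c2d_2; apply HF. }
  assert (E : RInt (fun z => F x z) c d - RInt (fun z => F x0 z) c d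
             = RInt (fun z => F x z - F x0 z) c d).
  { symmetry; apply (RInt_minus (V:=R_CompleteNormedModule)); apply Hex. }
  rewrite E.
  apply Rle_lt_trans with ((d - c) * (eps / (d - c + 1))).
  - apply abs_RInt_le_const; auto.
    + apply (ex_RInt_minus (V:=R_CompleteNormedModule)); apply Hex.
    + intros t Ht. apply Rlt_le.
      destruct (Rabs_def2 _ _ Hx).
      apply (Hdl t x0 t x); try lra.
      rewrite Rminus_eq_0, Rabs_R0; apply cond_pos.
  - apply Rlt_le_trans with ((d - c + 1) * (eps / (d - c + 1))).
    + apply Rmult_lt_compat_r; lra.
    + right; field; lra.
Qed.

Lemma param_cont F c d x0 : (forall x z, continuity_2d_pt F x z) ->
  continuity_pt (fun x => RInt (fun z => F x z) c d) x0.
Proof.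
  intros HF. destruct (Rle_dec c d) as [h|h].
  - now apply param_cont0.
  - apply continuity_pt_ext with (fun x => - RInt (fun z => F x z) d c).
    + intros x. rewrite <- (opp_RInt_swap (V:=R_CompleteNormedModule)).
      2:{
      apply (ex_RInt_continuous (V:=R_CompleteNormedModule)); intros z _.
      apply continuity_pt_filterlim; apply c2d_2; apply HF. }
      change (opp (RInt (fun z => F x z) c d)) with (- RInt (fun z => F x z) c d); ring.
    + apply continuity_pt_opp; apply param_cont0; auto; lra.
Qed.

Lemma ex_RInt_c f a b : (forall x, continuity_pt f x) -> ex_RInt f a b.
Proof.
  intros H; apply (ex_RInt_continuous (V:=R_CompleteNormedModule)); intros z _.
  apply continuity_pt_filterlim; apply H.
Qed.

Lemma deriv_RInt f a t : (forall x, continuity_pt f x) ->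
  is_derive (fun u => RInt f a u) t (f t).
Proof.
  intros H. apply (is_derive_RInt (V:=R_NormedModule) f (fun u => RInt f a u) a).
  - apply filter_forall; intros u. apply (RInt_correct (V:=R_CompleteNormedModule)).
    now apply ex_RInt_c.
  - apply continuity_pt_filterlim; apply H.
Qed.

Lemma fubini F a b c d : (forall x z, continuity_2d_pt F x z) ->
  RInt (fun x => RInt (fun z => F x z) c d) a b =
  RInt (fun z => RInt (fun x => F x z) a b) c d.
Proof.
  intros HF.
  set (I1 := fun x => RInt (fun z => F x z) c d).
  assert (CI1 : forall x, continuity_pt I1 x) by (intros; apply param_cont; auto).
  assert (D1 : forall t, is_derive (fun t => RInt I1 a t) t (I1 t))
    by (intros; now apply deriv_RInt).
  assert (CF1 : forall x z, continuity_pt (fun t => F t z) x) by (intros; apply c2d_1; auto).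
  assert (DF : forall z t, is_derive (fun u => RInt (fun x => F x z) a u) t (F t z))
    by (intros; now apply (deriv_RInt (fun x => F x z))).
  assert (D2 : forall t, is_derive (fun t => RInt (fun z => RInt (fun x => F x z) a t) c d) t (I1 t)).
  { intros t.
    assert (Hd := is_derive_RInt_param (fun t z => RInt (fun x => F x z) a t) c d t).
    unfold I1.
    replace (RInt (fun z => F t z) c d) with
      (RInt (fun z => Derive (fun u => RInt (fun x => F x z) a u) t) c d).
    - apply Hd.
      + apply filter_forall; intros u z _. eexists; apply DF.
      + intros z _. apply continuity_2d_pt_ext with F.
        * intros u v. symmetry. apply is_derive_unique, DF.
        * apply HF.
      + apply filter_forall; intros u. apply ex_RInt_c. intros z.
        apply (param_cont (fun z x => F x z)). intros; apply c2d_swap, HF.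
    - apply RInt_ext. intros z _. apply is_derive_unique, DF. }
  set (H := fun t => RInt I1 a t - RInt (fun z => RInt (fun x => F x z) a t) c d).
  assert (DH : forall t, is_derive H t 0).
  { intros t. replace 0 with (I1 t - I1 t) by ring.
    apply (is_derive_minus (K:=R_AbsRing) (V:=R_NormedModule)); auto. }
  destruct (MVT_gen H a b (fun _ => 0)) as [x [_ Hx]].
  - intros; apply DH.
  - intros x _. apply continuity_pt_filterlim.
    apply (ex_derive_continuous (K:=R_AbsRing) (V:=R_NormedModule)). eexists; apply DH.
  - unfold H in Hx. rewrite Rmult_0_l in Hx.
    rewrite (RInt_point (V:=R_CompleteNormedModule)) in Hx.
    rewrite (RInt_ext (V:=R_CompleteNormedModule) (fun z => RInt (fun x => F x z) a a) (fun _ => 0)) in Hx.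
    2: { intros; apply (RInt_point (V:=R_CompleteNormedModule)). }
    rewrite (RInt_const (V:=R_CompleteNormedModule)) in Hx.
    unfold I1 in Hx. change (scal (d - c) 0) with ((d-c)*0) in Hx.
    change (@zero R_CompleteNormedModule) with 0 in Hx. unfold I1; lra.
Qed.


Lemma cont_of_deriv f df : (forall x, is_derive f x (df x)) -> forall x, continuity_pt f x.
Proof.
  intros H x. apply continuity_pt_filterlim.
  apply (ex_derive_continuous (K:=R_AbsRing) (V:=R_NormedModule)). eexists; apply H.
Qed.

Lemma ibp u du v dv a b :
  (forall x, is_derive u x (du x)) -> (forall x, is_derive v x (dv x)) ->
  (forall x, continuity_pt du x) -> (forall x, continuity_pt dv x) ->
  RInt (fun x => u x * dv x) a b = u b * v b - u a * v a - RInt (fun x => du x * v x) a b.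
Proof.
  intros Hu Hv Cu Cv.
  assert (cu := cont_of_deriv _ _ Hu). assert (cv := cont_of_deriv _ _ Hv).
  assert (E1 : RInt (fun x => du x * v x + u x * dv x) a b = u b * v b - u a * v a).
  { apply is_RInt_unique.
    apply (is_RInt_derive (V:=R_CompleteNormedModule) (fun x => u x * v x)).
    - intros x _. apply (is_derive_mult (K:=R_AbsRing)); auto. intros; apply Rmult_comm.
    - intros x _. apply continuity_pt_filterlim.
      apply continuity_pt_plus; apply continuity_pt_mult; auto. }
  assert (E2 : RInt (fun x => du x * v x + u x * dv x) a b =
               RInt (fun x => du x * v x) a b + RInt (fun x => u x * dv x) a b).
  { apply (RInt_plus (V:=R_CompleteNormedModule)); apply ex_RInt_c; intros;
      apply continuity_pt_mult; auto. }
  lra.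
Qed.

Lemma RInt_scal_l (c : R) f a b : ex_RInt f a b ->
  RInt (fun x => c * f x) a b = c * RInt f a b.
Proof. intros H. apply (RInt_scal (V:=R_CompleteNormedModule)); auto. Qed.

Lemma cont_poly_l z m : forall x, continuity_pt (fun x => (z - x) ^ m) x.
Proof.
  intros x. apply continuity_pt_filterlim.
  apply (ex_derive_continuous (K:=R_AbsRing) (V:=R_NormedModule)). auto_derive; auto.
Qed.

Lemma der_poly_l z m x : is_derive (fun x => (z - x) ^ S m) x (- (INR (S m)) * (z - x) ^ m).
Proof. auto_derive; auto. change (match m with 0%nat => 1 | S _ => INR m + 1 end) with (INR (S m)). unfold Rminus; ring. Qed.

Lemma der_poly_r y m x : is_derive (fun x => (x - y) ^ S m) x (INR (S m) * (x - y) ^ m).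
Proof. auto_derive; auto. change (match m with 0%nat => 1 | S _ => INR m + 1 end) with (INR (S m)). unfold Rminus; ring. Qed.

Lemma TL (phi : R -> R)
  (DD : forall k x, is_derive (Derive_n phi k) x (Derive_n phi (S k) x))
  (Hz : forall k x, x <= -1 \/ 1 <= x -> Derive_n phi k x = 0) :
  forall m j z, RInt (fun x => (z - x) ^ m * Derive_n phi (m + 1 + j) x) (-1) z
              = INR (fact m) * Derive_n phi j z.
Proof.
  assert (C : forall k x, continuity_pt (Derive_n phi k) x).
  { intros k; apply (cont_of_deriv _ _ (DD k)). }
  induction m as [|m IH]; intros j z.
  - simpl. rewrite (RInt_ext (V:=R_CompleteNormedModule) _ (Derive_n phi (S j))).
    2:{ intros; req; simpl; ring. }
    rewrite (is_RInt_unique _ _ _ (Derive_n phi j z - Derive_n phi j (-1))).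
    + rewrite (Hz j (-1)) by lra. req; ring.
    + apply (is_RInt_derive (V:=R_CompleteNormedModule) (Derive_n phi j)).
      * intros; apply DD.
      * intros; apply continuity_pt_filterlim, C.
  - rewrite (ibp (fun x => (z - x) ^ S m) (fun x => - (INR (S m)) * (z - x) ^ m)
                 (Derive_n phi (m + 1 + j)) (Derive_n phi (S m + 1 + j))).
    + rewrite (Hz _ (-1)) by lra. simpl ((z - z) ^ S m). rewrite Rminus_eq_0.
      rewrite (RInt_ext (V:=R_CompleteNormedModule) _
                 (fun x => - INR (S m) * ((z - x) ^ m * Derive_n phi (m + 1 + j) x))).
      2:{ intros; req; ring. }
      rewrite RInt_scal_l, IH.
      * rewrite fact_simpl, mult_INR. req; ring.
      * apply ex_RInt_c; intros; apply continuity_pt_mult; [apply cont_poly_l | apply C].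
    + intros; apply der_poly_l.
    + intros; apply DD.
    + intros; apply continuity_pt_mult; [apply continuity_pt_const; intros ? ?; reflexivity | apply cont_poly_l].
    + apply C.
Qed.

Lemma cont_poly_r y m : forall x, continuity_pt (fun x => (x - y) ^ m) x.
Proof.
  intros x. apply continuity_pt_filterlim.
  apply (ex_derive_continuous (K:=R_AbsRing) (V:=R_NormedModule)). auto_derive; auto.
Qed.

Lemma TR (phi : R -> R)
  (DD : forall k x, is_derive (Derive_n phi k) x (Derive_n phi (S k) x))
  (Hz : forall k x, x <= -1 \/ 1 <= x -> Derive_n phi k x = 0) :
  forall m y, RInt (fun x => (x - y) ^ m * Derive_n phi (S m) x) y 1
              = (-1) ^ (S m) * INR (fact m) * phi y.
Proof.
  assert (C : forall k x, continuity_pt (Derive_n phi k) x).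
  { intros k; apply (cont_of_deriv _ _ (DD k)). }
  induction m as [|m IH]; intros y.
  - simpl. rewrite (RInt_ext (V:=R_CompleteNormedModule) _ (Derive_n phi 1)).
    2:{ intros; req; simpl; ring. }
    rewrite (is_RInt_unique _ _ _ (Derive_n phi 0 1 - Derive_n phi 0 y)).
    + rewrite (Hz 0%nat 1) by lra. simpl. req; ring.
    + apply (is_RInt_derive (V:=R_CompleteNormedModule) (Derive_n phi 0)).
      * intros; apply DD.
      * intros; apply continuity_pt_filterlim, C.
  - rewrite (ibp (fun x => (x - y) ^ S m) (fun x => (INR (S m)) * (x - y) ^ m)
                 (Derive_n phi (S m)) (Derive_n phi (S (S m)))).
    + rewrite (Hz _ 1) by lra. simpl ((y - y) ^ S m). rewrite Rminus_eq_0.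
      rewrite (RInt_ext (V:=R_CompleteNormedModule) _
                 (fun x => INR (S m) * ((x - y) ^ m * Derive_n phi (S m) x))).
      2:{ intros; req; ring. }
      rewrite RInt_scal_l, IH.
      * rewrite fact_simpl, mult_INR. simpl. req; ring.
      * apply ex_RInt_c; intros; apply continuity_pt_mult; [apply cont_poly_r | apply C].
    + intros; apply der_poly_r.
    + intros; apply DD.
    + intros; apply continuity_pt_mult; [apply continuity_pt_const; intros ? ?; reflexivity | apply cont_poly_r].
    + apply C.
Qed.
Lemma RInt_ext_R (f g : R -> R) a b : (forall x, Rmin a b < x < Rmax a b -> f x = g x) ->
  RInt f a b = RInt g a b.
Proof. apply (RInt_ext (V:=R_CompleteNormedModule)). Qed.

Lemma RInt_zero a b : RInt (fun _ => 0) a b = 0.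
Proof. rewrite (RInt_const (V:=R_CompleteNormedModule)). apply Rmult_0_r. Qed.

Lemma cont_rmax : forall t, continuity_pt (fun t => Rmax 0 t) t.
Proof.
  intros t. apply continuity_pt_ext with (fun t => (t + Rabs t) / 2).
  - intros x. unfold Rmax; destruct (Rle_dec 0 x).
    + rewrite Rabs_right by lra; lra.
    + rewrite Rabs_left by lra; lra.
  - unfold Rdiv. apply continuity_pt_mult; [|apply continuity_pt_const; intros ? ?; reflexivity].
    apply continuity_pt_plus; [apply continuity_pt_id | apply Rcontinuity_abs].
Qed.

Lemma cont_relu p : forall t, continuity_pt (relu_pow p) t.
Proof.
  induction p as [|p IH]; intros t; unfold relu_pow; simpl.
  - apply continuity_pt_const; intros ? ?; reflexivity.
  - apply continuity_pt_mult; [apply cont_rmax | apply IH].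
Qed.

Lemma relu_pos p t : 0 <= t -> relu_pow p t = t ^ p.
Proof. intros; unfold relu_pow; rewrite Rmax_right; auto. Qed.

Lemma relu_neg p t : (1 <= p)%nat -> t <= 0 -> relu_pow p t = 0.
Proof. intros; unfold relu_pow; rewrite Rmax_left by auto; apply pow_i; lia. Qed.

Lemma cont2_F (h : R -> R) p y (Ch : forall x, continuity_pt h x) :
  forall x z, continuity_2d_pt (fun x z => h x * (relu_pow p (z - x) * relu_pow p (z - y))) x z.
Proof.
  intros x z.
  apply continuity_2d_pt_mult.
  - apply (continuity_1d_2d_pt_comp h (fun u _ => u)); [apply Ch | apply continuity_2d_pt_id1].
  - apply continuity_2d_pt_mult.
    + apply (continuity_1d_2d_pt_comp (relu_pow p) (fun u v => v - u)); [apply cont_relu|].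
      apply continuity_2d_pt_minus; [apply continuity_2d_pt_id2 | apply continuity_2d_pt_id1].
    + apply (continuity_1d_2d_pt_comp (relu_pow p) (fun u v => v - y)); [apply cont_relu|].
      apply continuity_2d_pt_minus; [apply continuity_2d_pt_id2 | apply continuity_2d_pt_const].
Qed.

Lemma support_zero (phi : R -> R) a b : -1 < a -> b < 1 ->
  (forall x, x < a \/ b < x -> phi x = 0) ->
  forall k x, x <= -1 \/ 1 <= x -> Derive_n phi k x = 0.
Proof.
  intros ha hb Hs k x Hx.
  assert (L : locally x (fun t => phi t = (fun _ => 0) t)).
  { destruct Hx as [Hx|Hx].
    - assert (Hp : 0 < a - x) by lra.
      exists (mkposreal _ Hp); intros t Ht. change (Rabs (t - x) < a - x) in Ht.
      apply Hs; left. destruct (Rabs_def2 _ _ Ht); lra.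
    - assert (Hp : 0 < x - b) by lra.
      exists (mkposreal _ Hp); intros t Ht. change (Rabs (t - x) < x - b) in Ht.
      apply Hs; right. destruct (Rabs_def2 _ _ Ht); lra. }
  rewrite (Derive_n_ext_loc _ _ k x L). destruct k; [reflexivity|apply Derive_n_const].
Qed.

Theorem lemma1 (p : nat) (hp : (1 <= p)%nat) (y : R) (hy : -1 <= y <= 1) :
  distr_deriv_n_eq (fun x => G p x y) (2 * p + 2)
    (fun phi => (-1) ^ (p - 1) * (INR (fact p)) ^ 2 * dirac y phi).
Proof.
  intros phi [Hd [a [b [ha [hb Hs]]]]]. unfold dirac.
  assert (DD : forall k x, is_derive (Derive_n phi k) x (Derive_n phi (S k) x)).
  { intros k x. apply Derive_correct, (Hd (S k) x). }
  assert (Hz := support_zero phi a b ha hb Hs).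
  assert (C : forall k x, continuity_pt (Derive_n phi k) x).
  { intros k; apply (cont_of_deriv _ _ (DD k)). }
  set (psi := Derive_n phi (2 * p + 2)).
  set (F := fun x z => psi x * (relu_pow p (z - x) * relu_pow p (z - y))).
  assert (CF : forall x z, continuity_2d_pt F x z) by (apply cont2_F; apply C).
  assert (CR : forall t, continuity_pt (relu_pow p) t) by apply cont_relu.
  assert (CRs : forall c t, continuity_pt (fun t => relu_pow p (t - c)) t).
  { intros c t. apply (continuity_pt_comp (fun t => t - c) (relu_pow p)); [|apply CR].
    apply continuity_pt_minus; [apply continuity_pt_id|apply continuity_pt_const; intros ? ?; reflexivity]. }
  assert (CRl : forall c t, continuity_pt (fun t => relu_pow p (c - t)) t).
  { intros c t. apply (continuity_pt_comp (fun t => c - t) (relu_pow p)); [|apply CR].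
    apply continuity_pt_minus; [apply continuity_pt_const; intros ? ?; reflexivity|apply continuity_pt_id]. }
  rewrite (RInt_ext_R _ (fun x => RInt (fun z => F x z) (-1) 1)).
  2:{ intros x _. unfold G, F. rewrite RInt_scal_l. apply Rmult_comm.
      apply ex_RInt_c; intros; apply continuity_pt_mult; [apply CRs | apply CRs]. }
  rewrite fubini by apply CF.
  assert (Inner : forall z, -1 <= z <= 1 ->
     RInt (fun x => relu_pow p (z - x) * psi x) (-1) 1 = INR (fact p) * Derive_n phi (S p) z).
  { intros z Hzz.
    rewrite <- (RInt_Chasles (V:=R_CompleteNormedModule) _ (-1) z 1).
    2,3: apply ex_RInt_c; intros; apply continuity_pt_mult; [apply CRl | apply C].
    rewrite (RInt_ext_R _ (fun x => (z - x) ^ p * Derive_n phi (p + 1 + S p) x) (-1) z).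
    2:{ intros x Hx. rewrite Rmin_left, Rmax_right in Hx by lra.
        rewrite relu_pos by lra. unfold psi. do 2 f_equal. lia. }
    rewrite (RInt_ext_R _ (fun _ => 0) z 1).
    2:{ intros x Hx. rewrite Rmin_left, Rmax_right in Hx by lra.
        rewrite relu_neg; [ring|exact hp|lra]. }
    rewrite RInt_zero, TL; auto. change (plus ?u 0) with (u + 0). req; ring. }
  rewrite (RInt_ext_R _ (fun z => INR (fact p) * (relu_pow p (z - y) * Derive_n phi (S p) z))).
  2:{ intros z Hz'. rewrite Rmin_left, Rmax_right in Hz' by lra.
      unfold F. rewrite (RInt_ext_R _ (fun x => relu_pow p (z - y) * (relu_pow p (z - x) * psi x))).
      2:{ intros; ring. }
      rewrite RInt_scal_l. 2:{ apply ex_RInt_c; intros; apply continuity_pt_mult; [apply CRl | apply C]. }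
      rewrite Inner by lra. req; ring. }
  rewrite RInt_scal_l.
  2:{ apply ex_RInt_c; intros; apply continuity_pt_mult; [apply CRs | apply C]. }
  rewrite <- (RInt_Chasles (V:=R_CompleteNormedModule) _ (-1) y 1).
  2,3: apply ex_RInt_c; intros; apply continuity_pt_mult; [apply CRs | apply C].
  rewrite (RInt_ext_R _ (fun _ => 0) (-1) y).
  2:{ intros x Hx. rewrite Rmin_left, Rmax_right in Hx by lra.
      rewrite relu_neg; [ring|exact hp|lra]. }
  rewrite (RInt_ext_R _ (fun x => (x - y) ^ p * Derive_n phi (S p) x) y 1).
  2:{ intros x Hx. rewrite Rmin_left, Rmax_right in Hx by lra.
      rewrite relu_pos by lra. reflexivity. }
  rewrite RInt_zero, TR; auto.
  change (plus 0 ?u) with (0 + u).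
  destruct p as [|q]; [lia|].
  replace (S q - 1)%nat with q by lia.
  replace (2 * S q + 2)%nat with (2 * (S q + 1))%nat by lia.
  rewrite pow_mult. simpl. replace (-1 * (-1 * 1)) with 1 by ring. rewrite pow1. req; ring.
Qed.
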